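(* Let $r<0$ and $0<y_1<y_2$, and let $p(z)=\prod_{j=1}^2(z-(r+iy_j))(z-(r-iy_j))$. Then $(1/p(n))_{n\in\mathbb Z_+}$ is not a Hausdorff moment sequence.
   Context: A sequence $(x_n)_{n\in\mathbb Z_+}$ of positive numbers is a Hausdorff moment sequence if there is a positive Radon measure $\mu$ on $[0,1]$ with $x_n=\int_0^1 t^n\,d\mu(t)$ for all $n\in\mathbb Z_+$. *)

(* Defs.v *)
From HB Require Import structures.
From mathcomp Require Import all_boot all_order all_algebra.
From mathcomp Require Import all_classical all_reals all_analysis.
Set Implicit Arguments. Unset Strict Implicit. Unset Printing Implicit Defensive.
Import Order.TTheory GRing.Theory Num.Theory.
Local Open Scope classical_set_scope.
Local Open Scope ring_scope.

(* On the compact [0,1] every finite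
   positive Borel measure is Radon, and finiteness follows from n = 0. *)
Definition hausdorff_moment_seq (R : realType) (x : nat -> R) : Prop :=
  (forall n, 0 < x n) /\
  exists mu : {measure set R -> \bar R},
    mu (~` `[0%R, 1%R]) = 0%E /\
    forall n : nat, (\int[mu]_(t in `[0%R, 1%R]) ((t ^+ n)%:E) = (x n)%:E)%E.

(* Main.v *)
Require Import Defs.
From HB Require Import structures.
From mathcomp Require Import all_boot all_order all_algebra.
From mathcomp Require Import all_classical all_reals all_analysis.
From mathcomp Require Import complex.
From mathcomp Require Import ring lra.
Import Order.TTheory GRing.Theory Num.Theory numFieldNormedType.Exports.
Local Open Scope ring_scope.

Fixpoint Dif {V : zmodType} (j : nat) (f : nat -> V) : nat -> V :=
  match j with 0 => f | j.+1 => fun k => Dif j f k - Dif j f k.+1 end.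

Lemma moment_dif (R : realType) (mu : {measure set R -> \bar R}) (x : nat -> R) :
  (forall n : nat, (\int[mu]_(t in `[0%R, 1%R]) ((t ^+ n)%:E) = (x n)%:E)%E) ->
  forall j k, 0 <= Dif j x k.
Proof.
move=> hx.
have mD : measurable (`[0%R, 1%R] : set R) by exact: measurable_itv.
have key : forall j k, (\int[mu]_(t in `[0%R, 1%R]) ((t ^+ k * (1 - t) ^+ j)%:E) = (Dif j x k)%:E)%E.
  elim=> [|j IH] k.
    rewrite /=; under eq_integral do rewrite expr0 mulr1. exact: hx.
  have mf : forall m : nat, measurable_fun (`[0%R, 1%R] : set R) (fun t : R => t ^+ m * (1 - t) ^+ j).
    move=> m; apply: measurable_realfun.measurable_funM; apply: measurable_realfun.measurable_funX => //.
    by apply: measurable_realfun.measurable_funB => //; exact: measurable_cst.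
  have intg : forall m : nat, mu.-integrable (`[0%R, 1%R] : set R) (EFin \o (fun t : R => t ^+ m * (1 - t) ^+ j)).
    move=> m; apply/integrableP; split; first by apply/measurable_realfun.measurable_EFinP; exact: mf.
    rewrite (_ : (\int[mu]_(t in _) _ = \int[mu]_(t in `[0%R, 1%R]) (t ^+ m * (1 - t) ^+ j)%:E)%E).
      by rewrite IH; exact: ltry.
    apply: eq_integral => t; rewrite inE /= in_itv /= => /andP[t0 t1].
    rewrite /= ger0_norm //; apply: mulr_ge0; apply: exprn_ge0 => //.
    by rewrite subr_ge0.
  transitivity (\int[mu]_(t in `[0%R, 1%R]) ((t ^+ k * (1 - t) ^+ j)%:E - (t ^+ k.+1 * (1 - t) ^+ j)%:E))%E.
    apply: eq_integral => t _; rewrite -EFinB; congr EFin.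
    rewrite !exprS; set a := (1 - t) ^+ j; set b := t ^+ k; ring.
  by rewrite (integralB_EFin mD (intg k) (intg k.+1)) !IH -EFinB.
move=> j k; rewrite -lee_fin -key; apply: integral_ge0.
move=> t; rewrite /= in_itv /= => /andP[t0 t1].
rewrite lee_fin; apply: mulr_ge0; apply: exprn_ge0 => //.
by rewrite subr_ge0.
Qed.

Lemma Dif_lin {U V : zmodType} (h : U -> V) (hB : forall a b, h (a - b) = h a - h b)
  (f : nat -> U) j k : h (Dif j f k) = Dif j (fun n => h (f n)) k.
Proof. by elim: j k => [|j IH] k //=; rewrite hB !IH. Qed.

Lemma Dif_ext {V : zmodType} (f g : nat -> V) : f =1 g -> forall j k, Dif j f k = Dif j g k.
Proof. by move=> fg; elim=> [|j IH] k //=; rewrite !IH. Qed.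

Lemma DifB (R : comNzRingType) (f g : nat -> R) j k :
  Dif j (fun n => f n - g n) k = Dif j f k - Dif j g k.
Proof. elim: j k => [|j IH] k //=; rewrite !IH; ring. Qed.

Lemma DifZ (R : comNzRingType) (c : R) (f : nat -> R) j k :
  Dif j (fun n => c * f n) k = c * Dif j f k.
Proof. elim: j k => [|j IH] k //=; rewrite !IH; ring. Qed.


Section Cx.
Local Open Scope complex_scope.
Variable R : realType.
Lemma natC (n : nat) : (n%:R : R[i]) = (n%:R) +i* 0.
Proof. by rewrite -(rmorph_nat (real_complex R)). Qed.
Lemma ImB (a b : R[i]) : complex.Im (a - b) = complex.Im a - complex.Im b.
Proof. by case: a => a1 a2; case: b => b1 b2; simpc. Qed.
Lemma Im_inv (z : R[i]) : complex.Im z^-1 = - complex.Im z / (complex.Re z ^+2 + complex.Im z ^+ 2).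
Proof. case: z => a b /=. by rewrite mulNr. Qed.
Lemma ImMn (n : nat) (z : R[i]) : complex.Im ((n%:R : R[i]) * z) = n%:R * complex.Im z.
Proof. case: z => a b; rewrite natC; simpc => /=. ring. Qed.
Lemma Cneq0 (a b : R) : b != 0 -> (a +i* b) != 0.
Proof. move=> hb; apply/eqP => h. have := congr1 (@complex.Im R) h. simpl. move=> hh; by rewrite hh eqxx in hb. Qed.

Lemma polar1 (c y : R) : 0 < c ->
  Num.sqrt (c ^+ 2 + y ^+ 2) * cos (atan (y / c)) = c /\
  Num.sqrt (c ^+ 2 + y ^+ 2) * sin (atan (y / c)) = y.
Proof.
move=> c0; set x := y / c.
have s0 : 0 < Num.sqrt (1 + x ^+ 2).
  by rewrite sqrtr_gt0; apply: ltr_pwDl => //; exact: sqr_ge0.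
have hc : cos (atan x) = (Num.sqrt (1 + x ^+ 2))^-1 by rewrite cos_atan.
have cnz : cos (atan x) != 0 by rewrite hc invr_eq0 lt0r_neq0.
have hs : sin (atan x) = x * cos (atan x).
  have ht := atanK x; rewrite /tan in ht; rewrite -{2}ht; exact/esym/(divfK cnz).
have hsq : Num.sqrt (c ^+ 2 + y ^+ 2) = c * Num.sqrt (1 + x ^+ 2).
  have -> : c ^+ 2 + y ^+ 2 = c ^+ 2 * (1 + x ^+ 2).
    rewrite /x; field; exact: lt0r_neq0.
  by rewrite sqrtrM ?sqr_ge0 // sqrtr_sqr ger0_norm // ltW.
have e1 : Num.sqrt (c ^+ 2 + y ^+ 2) * cos (atan x) = c.
  by rewrite hsq hc mulfK // lt0r_neq0.
split => //.
by rewrite hs mulrCA e1 /x divfK // lt0r_neq0.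
Qed.

Lemma mul_polar (rh th sg s : R) :
  ((rh * cos th) +i* (- (rh * sin th))) * ((sg * cos s) +i* (- (sg * sin s))) =
  ((rh * sg) * cos (th + s)) +i* (- ((rh * sg) * sin (th + s))).
Proof. simpc; rewrite cosD sinD; congr (_ +i* _); ring. Qed.

Lemma polarQ (r y : R) (hr : r < 0) (k j : nat) :
  \prod_(i < j.+1) (((k + i)%:R : R[i]) - (r +i* y)) =
  ((\prod_(i < j.+1) Num.sqrt (((k + i)%:R - r) ^+ 2 + y ^+ 2)) *
       cos (\sum_(i < j.+1) atan (y / ((k + i)%:R - r)))) +i*
  (- ((\prod_(i < j.+1) Num.sqrt (((k + i)%:R - r) ^+ 2 + y ^+ 2)) *
       sin (\sum_(i < j.+1) atan (y / ((k + i)%:R - r))))).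
Proof.
have cpos : forall m : nat, 0 < (m%:R : R) - r.
  by move=> m; rewrite subr_gt0; apply: lt_le_trans hr _.
have fac : forall m : nat, ((m%:R : R[i]) - (r +i* y)) =
   ((Num.sqrt ((m%:R - r) ^+ 2 + y ^+ 2) * cos (atan (y / (m%:R - r)))) +i*
    (- (Num.sqrt ((m%:R - r) ^+ 2 + y ^+ 2) * sin (atan (y / (m%:R - r)))))).
  by move=> m; have [-> ->] := polar1 _ y (cpos m); rewrite natC; simpc.
elim: j => [|j IH].
  by rewrite !big_ord1 fac.
rewrite big_ord_recr /= IH fac mul_polar.
rewrite (big_ord_recr j.+1 (fun i : 'I_j.+2 => Num.sqrt (((k + i)%:R - r) ^+ 2 + y ^+ 2))) /=.
by rewrite (big_ord_recr j.+1 (fun i : 'I_j.+2 => atan (y / ((k + i)%:R - r)))) /=.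
Qed.

Lemma Im_polar_inv (rh th : R) : 0 < rh ->
  complex.Im (((rh * cos th) +i* (- (rh * sin th)))^-1) = sin th / rh.
Proof.
move=> h; rewrite Im_inv /= opprK sqrrN !exprMn -mulrDr cos2Dsin2 mulr1.
by field; exact: lt0r_neq0.
Qed.

Lemma Dif_inv (w : R[i]) (hw : complex.Im w != 0) j k :
  Dif j (fun n : nat => (n%:R - w)^-1) k = j`!%:R / \prod_(i < j.+1) ((k + i)%:R - w).
Proof.
have nz : forall m : nat, ((m%:R : R[i]) - w) != 0.
  move=> m; case: w hw => a b /= hb; rewrite natC; simpc; apply: Cneq0.
  by rewrite oppr_eq0.
elim: j k => [|j IH] k.
  by rewrite /= big_ord1 addn0 fact0 div1r.
rewrite /= !IH.
set A := \prod_(i < j.+1) ((k + i)%:R - w).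
set B := \prod_(i < j.+1) ((k.+1 + i)%:R - w).
have Anz : A != 0 by apply/prodf_neq0 => i _; exact: nz.
have Bnz : B != 0 by apply/prodf_neq0 => i _; exact: nz.
have e1 : \prod_(i < j.+2) ((k + i)%:R - w) = A * ((k + j.+1)%:R - w) by rewrite big_ord_recr.
have e2 : \prod_(i < j.+2) ((k + i)%:R - w) = (k%:R - w) * B.
  by rewrite big_ord_recl addn0; congr (_ * _); apply: eq_bigr => i _; rewrite /= addnS addSn.
have eB : B = A * ((k + j.+1)%:R - w) / (k%:R - w).
  by rewrite -e1 e2 mulrC mulKf // nz.
rewrite e1 eB factS natrM.
have hu : ((k + j.+1)%:R - w : R[i]) = (k%:R - w) + j.+1%:R by rewrite natrD; ring.
have unz := nz (k + j.+1)%N.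
rewrite hu in unz *.
have vnz := nz k.
field.
by move: unz; rewrite -natr1 [j%:R + 1]addrC => ->; rewrite vnz Anz.
Qed.


Lemma Dif_a (r y : R) (hr : r < 0) (hy : 0 < y) j k :
  Dif j (fun n : nat => ((n%:R - r) ^+ 2 + y ^+ 2)^-1) k =
  j`!%:R * (sin (\sum_(i < j.+1) atan (y / ((k + i)%:R - r))) /
     (\prod_(i < j.+1) Num.sqrt (((k + i)%:R - r) ^+ 2 + y ^+ 2))) / y.
Proof.
rewrite (@Dif_ext _ _ (fun n : nat => complex.Im ((n%:R - (r +i* y))^-1) / y)); last first.
  move=> n; rewrite natC; simpc; rewrite sqrrN.
  have : 0 < (n%:R - r) ^+ 2 + y ^+ 2.
    by apply: ltr_wpDl; [exact: sqr_ge0 | exact: exprn_gt0].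
  move=> hp; field; by rewrite !lt0r_neq0.
rewrite -(@Dif_lin _ _ (fun z : R[i] => complex.Im z / y)); last first.
  by move=> a b; rewrite ImB mulrBl.
rewrite Dif_inv; last by rewrite /= lt0r_neq0.
rewrite ImMn polarQ // Im_polar_inv ?mulrA //.
apply: prodr_gt0 => i _; rewrite sqrtr_gt0.
by apply: ltr_wpDl; [exact: sqr_ge0 | exact: exprn_gt0].
Qed.
End Cx.

Section A.
Variable R : realType.

Lemma atan_bounds (x : R) : 0 < x -> x / (1 + x ^+ 2) <= atan x <= x.
Proof.
move=> x0.
have := @MVT R atan (fun t => (1 + t ^+ 2)^-1) 0 x x0 (fun t _ => is_derive1_atan t).
case; first by apply: continuous_subspaceT => ?; exact: continuous_atan.
move=> c cI h.
move: cI; rewrite in_itv /= => /andP[c0 cx].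
rewrite atan0 !subr0 in h; rewrite h.
have p1 : 0 < 1 + c ^+ 2 by apply: ltr_pwDl => //; exact: sqr_ge0.
apply/andP; split.
  rewrite mulrC ler_pM2r // lef_pV2 ?posrE //; last by apply: ltr_pwDl => //; exact: sqr_ge0.
  by rewrite lerD2l; nra.
by rewrite -[leRHS]mul1r ler_pM2r // invf_le1 // lerDl sqr_ge0.
Qed.

Lemma exists_angle (r y e : R) (hr : r < 0) (hy : 0 < y) (he : e < 1) :
  exists k j : nat, sin (\sum_(i < j.+1) atan (y / ((k + i)%:R - r))) < - e.
Proof.
pose t0 : R := pi / 2 + pi.
have st0 : sin t0 = -1 by rewrite /t0 sinDpi sin_pihalf.
have t0pos : 0 < t0 by rewrite /t0; apply: addr_gt0; [apply: divr_gt0 => //|]; exact: pi_gt0.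
have H : \forall t \near t0, sin t < - e.
  apply: (@cvgr_lt _ _ (nbhs t0) _ sin (sin t0) (@continuous_sin R t0)).
  by rewrite st0 ltrN2.
move/nbhs_ballP: H => [d /= d0 hd].
set m := Num.min d 1.
have m0 : 0 < m by rewrite /m lt_min d0 ltr01.
have md : m <= d by rewrite /m ge_min lexx.
have m1 : m <= 1 by rewrite /m ge_min lexx orbT.
set k := (Num.truncn (y / m)).+1.
have hk : y / m < k%:R by exact: truncnS_gt.
have k0 : 0 < (k%:R : R) by rewrite ltr0n.
set c := fun i : nat => (k + i)%:R - r : R.
have ck : forall i, k%:R <= c i.
  by move=> i; rewrite /c natrD -addrA lerDl; apply: addr_ge0; [exact: ler0n | lra].
have cpos : forall i, 0 < c i by move=> i; exact: lt_le_trans k0 (ck i).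
have xpos : forall i, 0 < y / c i by move=> i; exact: divr_gt0.
have xm : forall i, y / c i < m.
  move=> i; apply: (@le_lt_trans _ _ (y / k%:R)).
    by rewrite ler_pM2l // lef_pV2 ?posrE.
  by rewrite ltr_pdivrMr // mulrC -ltr_pdivrMr.
have s_lt : forall i, atan (y / c i) < d.
  move=> i; have /andP[_ h] := atan_bounds _ (xpos i).
  by apply: (le_lt_trans h); apply: lt_le_trans (xm i) md.
have s_ge : forall i, (y / c i) / 2 <= atan (y / c i).
  move=> i; have /andP[h _] := atan_bounds _ (xpos i).
  apply: le_trans h; rewrite ler_pM2l // lef_pV2 ?posrE //; last first.
    by apply: ltr_pwDl => //; exact: sqr_ge0.
  have := xm i; have := xpos i; move: (y / c i) => z z0 zm.
  have z1 : z <= 1 by apply: le_trans m1; exact: ltW.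
  nra.
have s_ge0 : forall i, 0 <= atan (y / c i).
  move=> i; apply: le_trans (s_ge i); apply: divr_ge0 => //; exact: ltW.
set Th := fun n : nat => \sum_(i < n.+1) atan (y / c i).
have unb : exists n, t0 <= Th n.
  case: (pselect (exists n, t0 <= Th n)) => // /forallNP Hn.
  exfalso; apply: (@dvg_harmonic R); apply: nondecreasing_is_cvgn.
    by apply: nondecreasing_series => n _ _; exact: harmonic_ge0.
  set K := (k%:R - r + 1 : R).
  have K0 : 0 < K by rewrite /K; lra.
  exists (2 * K / y * t0) => _ [n _ <-].
  have Hlt : Th n < t0 by rewrite ltNge; apply/negP; exact: Hn.
  apply: (@le_trans _ _ (2 * K / y * Th n)); last first.
    by rewrite ler_pM2l ?ltW //; apply: divr_gt0 => //; exact: mulr_gt0.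
  rewrite /series /= big_mkord /Th big_ord_recr /= mulrDr.
  apply: (@le_trans _ _ (2 * K / y * \sum_(i < n) atan (y / c i))); last first.
    rewrite lerDl; apply: mulr_ge0; last exact: s_ge0.
    apply: divr_ge0; last exact: ltW.
    by apply: mulr_ge0 => //; exact: ltW.
  rewrite mulr_sumr; apply: ler_sum => i _.
  apply: (@le_trans _ _ (2 * K / y * ((y / c i) / 2))); last first.
    rewrite ler_pM2l ?s_ge //.
    by apply: divr_gt0 => //; exact: mulr_gt0.
  have -> : 2 * K / y * (y / c i / 2) = K / c i.
    by field; rewrite !lt0r_neq0 //.
  rewrite ler_pdivlMr // mulrC ler_pdivrMr ?ltr0n //.
  rewrite /K /c natrD -natr1.
  have : 0 <= (i%:R : R) by exact: ler0n.
  have : 0 <= (k%:R : R) by exact: ler0n.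
  move: (i%:R : R) (k%:R : R) => a b a0 b0.
  have hra : 0 <= (b - r) * a by apply: mulr_ge0 => //; lra.
  nra.
case: (ex_minnP unb) => j hj hmin.
exists k, j.
suff hball : `|t0 - Th j| < d.
  by apply: hd; rewrite -ball_normE /ball_ /=.
rewrite distrC ger0_norm ?subr_ge0 //.
case: j hj hmin => [|j] hj hmin.
  rewrite /Th big_ord1.
  by apply: le_lt_trans (s_lt 0%N); rewrite lerBlDr lerDl ltW.
have Hj : Th j < t0.
  rewrite ltNge; apply/negP => hjj; have := hmin j hjj; by rewrite ltnn.
have eq : Th j.+1 = Th j + atan (y / c j.+1) by rewrite /Th [in LHS]big_ord_recr.
rewrite eq; have := s_lt j.+1; lra.
Qed.
End A.

Theorem mainTheorem7 (R : realType) (r y1 y2 : R)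
  (hr : r < 0) (hy1 : 0 < y1) (hy12 : y1 < y2) :
  ~ hausdorff_moment_seq
      (fun n : nat => 1 / ((((n%:R - r) ^+ 2 + y1 ^+ 2) * ((n%:R - r) ^+ 2 + y2 ^+ 2)))).
Proof.
move=> [_ [mu [_ hmu]]].
have hpos := @moment_dif R mu (fun n : nat => 1 / ((((n%:R - r) ^+ 2 + y1 ^+ 2) * ((n%:R - r) ^+ 2 + y2 ^+ 2)))) hmu.
have hy2 : 0 < y2 by apply: lt_trans hy12.
have he : y1 / y2 < 1 by rewrite ltr_pdivrMr // mul1r.
have [k [j hs]] := @exists_angle R r y1 (y1 / y2) hr hy1 he.
have := hpos j k.
set C := (y2 ^+ 2 - y1 ^+ 2)^-1.
have C0 : 0 < C.
  by rewrite /C invr_gt0 subr_gt0; nra.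
rewrite (@Dif_ext _ _ (fun n : nat => C * (((n%:R - r) ^+ 2 + y1 ^+ 2)^-1 - ((n%:R - r) ^+ 2 + y2 ^+ 2)^-1))); last first.
  move=> n /=.
  have p1 : 0 < (n%:R - r) ^+ 2 + y1 ^+ 2.
    by apply: ltr_wpDl; [exact: sqr_ge0 | exact: exprn_gt0].
  have p2 : 0 < (n%:R - r) ^+ 2 + y2 ^+ 2.
    by apply: ltr_wpDl; [exact: sqr_ge0 | exact: exprn_gt0].
  have d0 : y2 ^+ 2 - y1 ^+ 2 != 0.
    by rewrite subr_eq0 eq_sym; apply/negP => /eqP h; move: C0; rewrite /C h subrr invr0 ltxx.
  rewrite /C; field.
  by rewrite d0 !lt0r_neq0.
rewrite DifZ DifB !Dif_a //.
set S1 := sin _; set S2 := sin _.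
set P1 := \prod_(i < j.+1) _; set P2 := \prod_(i < j.+1) _.
have P1pos : 0 < P1.
  apply: prodr_gt0 => i _; rewrite sqrtr_gt0.
  by apply: ltr_wpDl; [exact: sqr_ge0 | exact: exprn_gt0].
have P12 : P1 <= P2.
  apply: ler_prod => i _; rewrite sqrtr_ge0 /=.
  rewrite ler_sqrt; first by rewrite lerD2l; nra.
  by apply: addr_ge0; exact: sqr_ge0.
have S2ge : -1 <= S2 by exact: sin_geN1.
have hS1 : S1 * y2 < - y1.
  by move: hs; rewrite -/S1 -ltr_pdivlMr // mulNr.
have F0 : 0 < (j`!%:R : R) by rewrite ltr0n fact_gt0.
set D := _ - _.
have hD : D < 0.
  have e : D = j`!%:R * ((S1 * P2 * y2 - S2 * P1 * y1) / (P1 * P2 * y1 * y2)).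
    rewrite /D; field.
    by rewrite !lt0r_neq0 // (lt_le_trans P1pos P12).
  rewrite e pmulr_rlt0 // pmulr_llt0; last first.
    rewrite invr_gt0; apply: mulr_gt0 => //; apply: mulr_gt0 => //.
    by apply: mulr_gt0 => //; exact: lt_le_trans P1pos P12.
  have h1 : S1 * y2 * P2 < - y1 * P2.
    by rewrite ltr_pM2r // (lt_le_trans P1pos P12).
  have h2 : 0 <= y1 * (P2 - P1) by apply: mulr_ge0; [exact: ltW | rewrite subr_ge0].
  have h3 : 0 <= (S2 + 1) * (P1 * y1).
    by apply: mulr_ge0; [lra | apply: mulr_ge0; exact: ltW].
  nra.
by rewrite pmulr_rge0 // leNgt hD.
Qed.
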